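(* Let $\mathcal D$ be a filtered $\varphi$-module of dimension $d$ and $N\ge0$. Then the $\mathcal H$-module $L_N(\mathcal D)$ has rank $d$.
   Context: Let $p$ be an odd prime, $u$ a topological generator of $1+p\mathbb Z_p$, $K_n=\mathbb Q_p(\mu_{p^n})$. $\mathcal H$ is the ring of power series in $\mathbb Q_p[[x]]$ converging on the open unit disc of $\mathbb C_p$. A filtered $\varphi$-module is a $d$-dimensional $\mathbb Q_p$-vector space $\mathcal D$ with a bijective linear map $\varphi$ and a decreasing exhaustive separated filtration $\mathrm{Fil}^\bullet\mathcal D$; $t_{HT,d}$ is the largest integer $i$ with $\mathrm{Fil}^i\mathcal D\neq0$. $L_N(\mathcal D)$ is the $\mathcal H$-submodule of $\mathcal H\otimes_{\mathbb Q_p}\mathcal D$ of all $g$ such that $(1\otimes\varphi)^{-(n+1)}g(u^j\zeta-1)\in K_n\otimes\mathrm{Fil}^j\mathcal D$ for all integers $j\le t_{HT,d}$, all $n\ge N$ and all roots of unity $\zeta$ of order $p^n$. *)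

(* Defs.v *)
From HB Require Import structures.
From mathcomp Require Import all_boot all_order all_algebra.
From mathcomp Require Import reals.
Set Implicit Arguments.
Unset Strict Implicit.
Unset Printing Implicit Defensive.
Import Order.TTheory GRing.Theory Num.Theory.
Local Open Scope ring_scope.

Section Padic.
Variables (R : realType) (C : closedFieldType) (F : fieldType).

Definition seq_cvg_to (T : zmodType) (abs : T -> R) (s : nat -> T) (l : T) :=
  forall eps : R, 0 < eps -> exists M : nat, forall m, (M <= m)%N -> abs (s m - l) < eps.

Definition cauchy_seq (T : zmodType) (abs : T -> R) (s : nat -> T) :=
  forall eps : R, 0 < eps -> exists M : nat,
    forall m n, (M <= m)%N -> (M <= n)%N -> abs (s m - s n) < eps.

Definition series_sums (abs : C -> R) (a : nat -> C) (l : C) :=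
  seq_cvg_to abs (fun m => \sum_(k < m) a k) l.

Variables (abs : C -> R) (iota : {rmorphism F -> C}).

(* C is a complete non-archimedean valued algebraically closed field
   (a model of C_p), F (embedded by iota) is the closure of Q in it,
   i.e. a model of Q_p, with |p| = 1/p. *)
Definition padic_setting (p : nat) :=
  [/\ (forall x, 0 <= abs x) /\ (forall x, (abs x == 0) = (x == 0)),
      forall x y, abs (x * y) = abs x * abs y,
      forall x y, abs (x + y) <= Num.max (abs x) (abs y),
      abs (p%:R) = (p%:R)^-1 &
      [/\ forall s : nat -> C, cauchy_seq abs s -> exists l, seq_cvg_to abs s l,
          forall s : nat -> F, cauchy_seq (fun x => abs (iota x)) s ->
            exists l, seq_cvg_to (fun x => abs (iota x)) s l &
          forall (x : F) (eps : R), 0 < eps ->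
            exists q : rat, abs (iota x - iota (ratr q)) < eps]].

(* u is a topological generator of 1 + p Z_p *)
Definition top_generator (p : nat) (u : F) :=
  abs (iota u - 1) <= (p%:R)^-1 /\
  forall x : F, abs (iota x - 1) <= (p%:R)^-1 ->
    forall eps : R, 0 < eps -> exists k : int, abs (iota u ^ k - iota x) < eps.

(* filtered phi-module structure on D = F^d (row vectors); phi acts by v |-> v *m phi;
   Fil i is (the row space of) a matrix *)
Definition filtered_phi_module (d : nat) (phi : 'M[F]_d) (Fil : int -> 'M[F]_d) :=
  [/\ phi \in unitmx,
      forall i : int, (Fil (i + 1)%R <= Fil i)%MS,
      forall v : 'rV[F]_d, exists i : int, (v <= Fil i)%MS &
      forall v : 'rV[F]_d, (forall i : int, (v <= Fil i)%MS) -> v = 0].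

(* j <= t_{HT,d} (largest i with Fil^i <> 0) *)
Definition le_tHT (d : nat) (Fil : int -> 'M[F]_d) (j : int) :=
  exists i : int, j <= i /\ Fil i != 0.

(* K_n = Q_p(mu_{p^n}) inside C *)
Definition in_Kn (p n : nat) (x : C) :=
  exists z : C, (p ^ n)%N.-primitive_root z /\
    exists P : {poly F}, x = (map_poly iota P).[z].

(* K_n (x) W, W a sub-F-space of F^d, viewed inside C^d *)
Definition in_Kn_tensor (p n d : nat) (W : 'M[F]_d) (v : 'rV[C]_d) :=
  exists c : 'rV[C]_d, (forall i, in_Kn p n (c 0 i)) /\ v = c *m map_mx iota W.

(* the ring H: power series over Q_p converging on the open unit disc of C *)
Definition inH (a : nat -> F) :=
  forall z : C, abs z < 1 -> exists l, series_sums abs (fun k => iota (a k) * z ^+ k) l.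

Definition hmul (a b : nat -> F) (k : nat) : F := \sum_(i < k.+1) a i * b (k - i)%N.

(* L_N(D) as a predicate on H (x) D = H^d *)
Definition in_LN (p d : nat) (phi : 'M[F]_d) (Fil : int -> 'M[F]_d) (u : F) (N : nat)
    (g : 'I_d -> nat -> F) :=
  (forall i, inH (g i)) /\
  forall (j : int) (n : nat) (zeta : C),
    le_tHT Fil j -> (N <= n)%N -> (p ^ n)%N.-primitive_root zeta ->
    forall v : 'rV[C]_d,
      (forall i, series_sums abs
                   (fun k => iota (g i k) * (iota u ^ j * zeta - 1) ^+ k) (v 0 i)) ->
      in_Kn_tensor p n (Fil j) (v *m map_mx iota (invmx phi ^+ n.+1)).

Definition H_independent (d m : nat) (fam : 'I_m -> 'I_d -> nat -> F) :=
  forall h : 'I_m -> nat -> F, (forall k, inH (h k)) ->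
    (forall (i : 'I_d) (n : nat), \sum_(k < m) hmul (h k) (fam k i) n = 0) ->
    forall k n, h k n = 0.

(* rank of an H-submodule L of H^d (H a domain): maximal number of
   H-linearly independent elements of L *)
Definition H_rank (d : nat) (L : ('I_d -> nat -> F) -> Prop) (r : nat) :=
  (exists fam : 'I_r -> 'I_d -> nat -> F, (forall k, L (fam k)) /\ H_independent fam) /\
  (forall fam : 'I_r.+1 -> 'I_d -> nat -> F, (forall k, L (fam k)) -> ~ H_independent fam).

End Padic.

(* Main.v *)
Require Import Defs.
From HB Require Import structures.
From mathcomp Require Import all_boot all_order all_algebra.
From mathcomp Require Import reals.
From mathcomp Require Import boolp zify ring lra.
Set Implicit Arguments.
Unset Strict Implicit.
Unset Printing Implicit Defensive.
Import Order.TTheory GRing.Theory Num.Theory.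
Local Open Scope ring_scope.

Section PS.
Variable F : fieldType.

Definition hmul' (a b : nat -> F) (k : nat) : F := \sum_(i < k.+1) a i * b (k - i)%N.

Record ps := PS { psc : nat -> F }.
HB.instance Definition _ := gen_eqMixin ps.
HB.instance Definition _ := gen_choiceMixin ps.

Lemma ps_ext (a b : ps) : (forall n, psc a n = psc b n) -> a = b.
Proof. by case: a; case: b => f g /= H; congr PS; apply: funext => n; rewrite H. Qed.

Definition ps0 := PS (fun _ => 0).
Definition psadd a b := PS (fun n => psc a n + psc b n).
Definition psopp a := PS (fun n => - psc a n).
Lemma psaddA : associative psadd. Proof. by move=> *; apply: ps_ext => n /=; rewrite addrA. Qed.
Lemma psaddC : commutative psadd. Proof. by move=> *; apply: ps_ext => n /=; rewrite addrC. Qed.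
Lemma psadd0 : left_id ps0 psadd. Proof. by move=> *; apply: ps_ext => n /=; rewrite add0r. Qed.
Lemma psaddN : left_inverse ps0 psopp psadd. Proof. by move=> *; apply: ps_ext => n /=; rewrite addNr. Qed.
HB.instance Definition _ := GRing.isZmodule.Build ps psaddA psaddC psadd0 psaddN.

Definition tr (a : nat -> F) k : {poly F} := \poly_(i < k.+1) a i.

Lemma hmul_poly a b k : hmul' a b k = (tr a k * tr b k)`_k.
Proof.
rewrite coefM /hmul'; apply: eq_bigr => i _.
rewrite !coef_poly ltn_ord; case: ifP => // /negP []; rewrite ltnS leq_subr //.
Qed.

Lemma coefM_agree (P P' Q Q' : {poly F}) k :
  (forall i, (i <= k)%N -> P`_i = P'`_i) -> (forall i, (i <= k)%N -> Q`_i = Q'`_i) ->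
  (P * Q)`_k = (P' * Q')`_k.
Proof.
move=> HP HQ; rewrite !coefM; apply: eq_bigr => i _.
rewrite HP ?HQ //; first exact: leq_subr.
by rewrite -ltnS.
Qed.

Definition psmul a b := PS (hmul' (psc a) (psc b)).
Definition ps1 := PS (fun n => (n == 0)%:R).

Lemma tr_agree a k i : (i <= k)%N -> (tr a k)`_i = a i.
Proof. by move=> H; rewrite coef_poly ltnS H. Qed.

Lemma psmulA : associative psmul.
Proof.
move=> a b c; apply: ps_ext => k; rewrite /psmul /= !hmul_poly.
transitivity ((tr (psc a) k * (tr (psc b) k * tr (psc c) k))`_k).
  apply: coefM_agree => [//|i Hi]; rewrite tr_agree // hmul_poly.
  apply: coefM_agree => j Hj; rewrite !tr_agree //; exact: leq_trans Hj Hi.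
rewrite mulrA.
apply: coefM_agree => [i Hi|//]; rewrite tr_agree // hmul_poly.
apply: coefM_agree => j Hj; rewrite !tr_agree //; exact: leq_trans Hj Hi.
Qed.

Lemma psmulC : commutative psmul.
Proof. by move=> a b; apply: ps_ext => k; rewrite /psmul /= !hmul_poly mulrC. Qed.

Lemma psmul1 : left_id ps1 psmul.
Proof.
move=> a; apply: ps_ext => k /=; rewrite hmul_poly.
have -> : tr (fun n => (n == 0)%:R) k = 1.
  apply/polyP => i; rewrite coef_poly coef1; case: ifP => // /negbT.
  by rewrite -leqNgt => H; case: i H => //.
by rewrite mul1r tr_agree.
Qed.

Lemma psmulDl : left_distributive psmul psadd.
Proof.
move=> a b c; apply: ps_ext => k /=; rewrite /hmul' -big_split /=.
by apply: eq_bigr => i _; rewrite mulrDl.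
Qed.

Lemma ps1_neq0 : ps1 != 0.
Proof. apply/eqP => /(congr1 (fun x => psc x 0)) /= /eqP; by rewrite oner_eq0. Qed.

HB.instance Definition _ := GRing.Zmodule_isComNzRing.Build ps psmulA psmulC psmul1 psmulDl ps1_neq0.

Lemma pscD a b n : psc (a + b) n = psc a n + psc b n. Proof. by []. Qed.
Lemma pscN a n : psc (- a) n = - psc a n. Proof. by []. Qed.
Lemma psc0 n : psc 0 n = 0. Proof. by []. Qed.
Lemma pscM a b n : psc (a * b) n = hmul' (psc a) (psc b) n. Proof. by []. Qed.
Lemma psc_sum I (r : seq I) P (f : I -> ps) n :
  psc (\sum_(i <- r | P i) f i) n = \sum_(i <- r | P i) psc (f i) n.
Proof. by apply: (big_morph (fun x => psc x n)) => //. Qed.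

Lemma ps_neq0 (a : ps) : a != 0 -> exists n, psc a n != 0.
Proof.
move=> H; apply/not_existsP => H'; move/eqP: H; apply; apply: ps_ext => n.
by have /negP := H' n; rewrite psc0; case: eqP.
Qed.

Lemma psmul_neq0 (a b : ps) : a != 0 -> b != 0 -> a * b != 0.
Proof.
move=> /ps_neq0 Ha /ps_neq0 Hb.
case: (ex_minnP Ha) => i0 Hi0 Hmi; case: (ex_minnP Hb) => j0 Hj0 Hmj.
apply/eqP => /(congr1 (fun x => psc x (i0 + j0)%N)); rewrite pscM psc0 /hmul'.
have Hlt : (i0 < (i0 + j0).+1)%N by rewrite ltnS leq_addr.
rewrite (bigD1 (Ordinal Hlt)) //= big1 ?addr0.
  by move/eqP; rewrite addKn mulf_eq0 (negbTE Hi0) (negbTE Hj0).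
move=> i /eqP Hne; have [Hl|Hg] : (i < i0 \/ i0 < i)%N.
    case: (ltngtP i i0) => //; [by left|by right|] => E; by case: Hne; apply: val_inj.
  have : psc a i == 0 by apply/negPn/negP => H; have := Hmi _ H; rewrite leqNgt Hl.
  by move/eqP ->; rewrite mul0r.
have : psc b (i0 + j0 - i) == 0.
  have Hlt2 : (i0 + j0 - i < j0)%N by have := ltn_ord i; lia.
  by apply/negPn/negP => H; have := Hmj _ H; rewrite leqNgt Hlt2.
by move/eqP ->; rewrite mulr0.
Qed.

End PS.

Section Dep.
Variable A : comNzRingType.
Variable S : A -> Prop.
Hypothesis HS0 : S 0.
Hypothesis HS1 : S 1.
Hypothesis HSD : forall x y, S x -> S y -> S (x + y).
Hypothesis HSN : forall x, S x -> S (- x).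
Hypothesis HSM : forall x y, S x -> S y -> S (x * y).
Hypothesis Hdom : forall x y : A, x != 0 -> y != 0 -> x * y != 0.

Lemma S_sum n (f : 'I_n -> A) : (forall k, S (f k)) -> S (\sum_k f k).
Proof. by move=> H; apply: big_ind => // *; exact: HSD. Qed.

Lemma dependence d : forall (fam : 'I_d.+1 -> 'I_d -> A), (forall k i, S (fam k i)) ->
  exists c : 'I_d.+1 -> A, (forall k, S (c k)) /\ (exists k, c k != 0) /\
    forall i, \sum_k c k * fam k i = 0.
Proof.
elim: d => [|d IH] fam HF.
  exists (fun _ => 1); split=> //; split; last by case.
  by exists ord0; exact: oner_neq0.
case: (boolP [exists k0, fam k0 ord_max != 0]) => [/existsP [k0 Hk0]|Hno].
- pose a := fam k0 ord_max.
  pose w (k : 'I_d.+1) (i : 'I_d) := a * fam (lift k0 k) (lift ord_max i)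
                         - fam (lift k0 k) ord_max * fam k0 (lift ord_max i).
  have [|c' [Sc' [[k1 Hk1] Hrel]]] := IH w.
    by move=> k i; rewrite /w; apply: HSD; [apply: HSM|apply: HSN; apply: HSM]; apply: HF.
  pose c (k : 'I_d.+2) := if unlift k0 k is Some k' then c' k' * a
                          else - \sum_k' c' k' * fam (lift k0 k') ord_max.
  have ck0 : c k0 = - \sum_k' c' k' * fam (lift k0 k') ord_max by rewrite /c unlift_none.
  have clift k' : c (lift k0 k') = c' k' * a by rewrite /c liftK.
  exists c; split; [|split].
  + move=> k; rewrite /c; case: unliftP => [k'|] _; first by apply: HSM; [apply: Sc'|apply: HF].
    by apply: HSN; apply: S_sum => k'; apply: HSM; [apply: Sc'|apply: HF].
  + by exists (lift k0 k1); rewrite clift; apply: Hdom.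
  + move=> i; rewrite (bigD1_ord k0) //= ck0.
    under eq_bigr => k' _ do rewrite clift.
    case: (unliftP ord_max i) => [i'|] ->.
      rewrite mulNr mulr_suml -sumrN -big_split /= -[RHS](Hrel i').
      apply: eq_bigr => k' _; rewrite /w /a; ring.
    rewrite mulNr mulr_suml -sumrN -big_split /=; apply: big1 => k' _; rewrite /a; ring.
- have Hz k : fam k ord_max = 0.
    by apply/eqP; move: Hno; rewrite negb_exists => /forallP /(_ k); rewrite negbK.
  pose fam' (k : 'I_d.+1) (i : 'I_d) := fam (lift ord_max k) (lift ord_max i).
  have [|c' [Sc' [[k1 Hk1] Hrel]]] := IH fam'.
    by move=> k i; apply: HF.
  pose c (k : 'I_d.+2) := if unlift ord_max k is Some k' then c' k' else 0.
  have clift k' : c (lift ord_max k') = c' k' by rewrite /c liftK.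
  exists c; split; [|split].
  + by move=> k; rewrite /c; case: unliftP.
  + by exists (lift ord_max k1); rewrite clift.
  + move=> i; rewrite (bigD1_ord ord_max) //= /c unlift_none mul0r add0r.
    under eq_bigr => k' _ do rewrite liftK.
    case: (unliftP ord_max i) => [i'|] ->; first exact: Hrel.
    by apply: big1 => k' _; rewrite Hz mulr0.
Qed.
End Dep.

Section Fil.
Variables (F : fieldType) (d : nat) (Fil : int -> 'M[F]_d).
Hypothesis Fdec : forall i : int, (Fil (i + 1)%R <= Fil i)%MS.

Lemma fil_mono (i j : int) : i <= j -> (Fil j <= Fil i)%MS.
Proof.
move=> Hij; have -> : j = i + (`|j - i|%N)%:Z by lia.
elim: `|j - i|%N => [|n IH]; first by rewrite addr0.
apply: submx_trans IH; rewrite -[n.+1]addn1 PoszD addrA; exact: Fdec.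
Qed.

Lemma fil_full : (forall v : 'rV[F]_d, exists i : int, (v <= Fil i)%MS) ->
  exists j0 : int, forall j, j <= j0 -> forall v : 'rV[F]_d, (v <= Fil j)%MS.
Proof.
move=> Hex; have [f Hf] := choice (fun r : 'I_d => Hex (row r 1%:M)).
exists (- \sum_r (`|f r|%N)%:Z) => j Hj v.
apply: submx_trans (submx1 v) _; apply/row_subP => r.
apply: submx_trans (Hf r) _; apply: fil_mono; apply: le_trans Hj _.
have Hr : (`|f r|%N)%:Z <= \sum_r0 (`|f r0|%N)%:Z.
  by rewrite (bigD1 r) //= lerDl sumr_ge0.
lia.
Qed.

Lemma fil_top : (forall v : 'rV[F]_d, (forall i : int, (v <= Fil i)%MS) -> v = 0) ->
  exists T : int, forall i : int, T < i -> Fil i = 0.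
Proof.
move=> Hsep.
have Hex : exists r, `[< exists n : nat, \rank (Fil n) = r >].
  by exists (\rank (Fil 0)); apply/asboolP; exists 0%N.
case: (ex_minnP Hex) => r /asboolP [n0 Hn0] Hmin.
have Hall : forall i : int, (Fil n0 <= Fil i)%MS.
  move=> i; case: (lerP (n0 : int) i) => Hi; last by apply: fil_mono; exact: ltW.
  have Hs : (Fil i <= Fil n0)%MS by apply: fil_mono.
  have Hi0 : (0 <= i)%R by apply: le_trans Hi.
  have [m Hm] : exists m : nat, i = m by exists `|i|%N; lia.
  have Hr : \rank (Fil i) = \rank (Fil n0).
    apply/eqP; rewrite eqn_leq mxrankS //= Hn0; apply: Hmin; apply/asboolP; exists m; by rewrite Hm.
  have := (mxrank_leqif_eq Hs).2; rewrite Hr eqxx => /esym /andP [_ H]; exact: H.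
have H0 : (Fil n0 <= (0 : 'M_d))%MS.
  apply/row_subP => k; rewrite (Hsep (row k (Fil n0))) ?sub0mx // => i.
  exact: submx_trans (row_sub k _) (Hall i).
exists n0 => i Hi; apply/eqP; rewrite -submx0; apply: submx_trans H0.
by apply: fil_mono; exact: ltW.
Qed.
End Fil.

Section An.
Variables (R : realType) (C : closedFieldType) (abs : C -> R) (p : nat).
Hypothesis abs_ge0 : forall x, 0 <= abs x.
Hypothesis abs_eq0 : forall x, (abs x == 0) = (x == 0).
Hypothesis absM : forall x y, abs (x * y) = abs x * abs y.
Hypothesis absD : forall x y, abs (x + y) <= Num.max (abs x) (abs y).
Hypothesis absp : abs p%:R = (p%:R)^-1.
Hypothesis pprime : prime p.
Hypothesis complete : forall s : nat -> C, cauchy_seq abs s -> exists l, seq_cvg_to abs s l.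

Lemma abs0 : abs 0 = 0. Proof. by apply/eqP; rewrite abs_eq0. Qed.
Lemma abs1 : abs 1 = 1.
Proof.
have H : abs 1 != 0 by rewrite abs_eq0 oner_eq0.
have := absM 1 1; rewrite mulr1 => /(congr1 (fun x => x / abs 1)).
by rewrite mulfK // divff // => <-.
Qed.
Lemma absN1 : abs (-1) = 1.
Proof.
have := absM (-1) (-1); rewrite mulrNN mulr1 abs1 => H.
have := abs_ge0 (-1); nra.
Qed.
Lemma absN x : abs (- x) = abs x. Proof. by rewrite -mulN1r absM absN1 mul1r. Qed.
Lemma absB x y : abs (x - y) = abs (y - x). Proof. by rewrite -absN opprB. Qed.
Lemma absX x n : abs (x ^+ n) = abs x ^+ n.
Proof. by elim: n => [|n IH]; rewrite ?expr0 ?abs1 // !exprS absM IH. Qed.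
Lemma absV x : abs (x^-1) = (abs x)^-1.
Proof.
have [->|H] := eqVneq x 0; first by rewrite invr0 abs0 invr0.
have H1 : abs x != 0 by rewrite abs_eq0.
have := absM x x^-1; rewrite divff // abs1 => E.
by apply: (mulfI H1); rewrite -E divff.
Qed.
Lemma abs_gt0 x : x != 0 -> 0 < abs x.
Proof. by move=> H; rewrite lt_neqAle abs_ge0 andbT eq_sym abs_eq0. Qed.

Lemma absD_le x y e : abs x <= e -> abs y <= e -> abs (x + y) <= e.
Proof. move=> H1 H2; apply: le_trans (absD x y) _; by rewrite ge_max H1 H2. Qed.
Lemma absD_lt x y e : abs x < e -> abs y < e -> abs (x + y) < e.
Proof. move=> H1 H2; apply: le_lt_trans (absD x y) _; by rewrite gt_max H1 H2. Qed.
Lemma absB_le x y e : abs x <= e -> abs y <= e -> abs (x - y) <= e.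
Proof. by move=> H1 H2; apply: absD_le; rewrite ?absN. Qed.
Lemma absB_lt x y e : abs x < e -> abs y < e -> abs (x - y) < e.
Proof. by move=> H1 H2; apply: absD_lt; rewrite ?absN. Qed.

Lemma abs_sum_le I (r : seq I) (P : pred I) (f : I -> C) e :
  0 <= e -> (forall i, P i -> abs (f i) <= e) -> abs (\sum_(i <- r | P i) f i) <= e.
Proof.
move=> He H; apply: (big_ind (fun x => abs x <= e)) => //; first by rewrite abs0.
by move=> x y Hx Hy; apply: absD_le.
Qed.
Lemma abs_sum_lt I (r : seq I) (P : pred I) (f : I -> C) e :
  0 < e -> (forall i, P i -> abs (f i) < e) -> abs (\sum_(i <- r | P i) f i) < e.
Proof.
move=> He H; apply: (big_ind (fun x => abs x < e)) => //; first by rewrite abs0.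
by move=> x y Hx Hy; apply: absD_lt.
Qed.

Lemma abs_natr_le1 n : abs n%:R <= 1.
Proof.
elim: n => [|n IH]; first by rewrite abs0.
by rewrite -addn1 natrD; apply: absD_le; rewrite // abs1.
Qed.

Lemma abs_intr_le1 (z : int) : abs z%:~R <= 1.
Proof. case: z => n; rewrite ?NegzE ?mulrNz ?absN; exact: abs_natr_le1. Qed.

Lemma ultra_eq x y : abs y < abs x -> abs (x + y) = abs x.
Proof.
move=> H; apply/eqP; rewrite eq_le; apply/andP; split.
  by apply: le_trans (absD x y) _; rewrite ge_max lexx ltW.
have : abs x <= Num.max (abs (x + y)) (abs y).
  by have := absD (x + y) (- y); rewrite addrK absN.
rewrite le_max => /orP[//|H']; by move: H; rewrite ltNge H'.
Qed.

Lemma p_gt1 : (1 < p)%N. Proof. exact: prime_gt1. Qed.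
Lemma pR_gt1 : 1 < p%:R :> R. Proof. by rewrite ltr1n p_gt1. Qed.

Lemma absp_lt1 : abs p%:R < 1.
Proof. rewrite absp invf_lt1; [exact: pR_gt1|]; have := pR_gt1; lra. Qed.

Lemma abs_coprime m : coprime p m -> abs m%:R = 1.
Proof.
move=> Hc; have Hm0 : (0 < m)%N.
  case: m Hc => //; rewrite /coprime gcdn0 => /eqP Hp; have := p_gt1; lia.
case: (Bezoutl p Hm0) => a _; rewrite gcdnC (eqP Hc) => /dvdnP [b Hb].
have E : abs (1 + (a * p)%:R) = 1.
  rewrite ultra_eq abs1 // natrM absM absp.
  apply: le_lt_trans (_ : 1 * p%:R^-1 < 1); last by rewrite mul1r -absp absp_lt1.
  by apply: ler_wpM2r; [rewrite invr_ge0 ler0n|exact: abs_natr_le1].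
have E' : ((1 + a * p)%N%:R : C) = 1 + (a * p)%:R by rewrite natrD.
move: E; rewrite -E' Hb natrM absM => E.
apply/eqP; rewrite eq_le abs_natr_le1 /=.
have := abs_natr_le1 b; have := abs_ge0 (b%:R); have := abs_ge0 (m%:R); nra.
Qed.

Lemma abs_pexp m : abs (p ^ m)%:R = ((p ^ m)%:R)^-1.
Proof. by rewrite natrX absX absp natrX exprVn. Qed.

Lemma abs_nat_ge k : (0 < k)%N -> (k%:R)^-1 <= abs (k%:R : C).
Proof.
move=> Hk; case: (pfactor_coprime pprime Hk) => m Hc E.
rewrite {2}E natrM absM abs_coprime // mul1r abs_pexp.
have Hpm : (0 < p ^ logn p k)%N by rewrite expn_gt0 prime_gt0.
rewrite lef_pV2 ?posrE ?ltr0n //.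
rewrite ler_nat {2}E; apply: leq_pmull.
by case: m Hc E => //; rewrite mul0n => _ E; move: Hk; rewrite E.
Qed.


Lemma cvg_unique s l1 l2 : seq_cvg_to abs s l1 -> seq_cvg_to abs s l2 -> l1 = l2.
Proof.
move=> H1 H2; apply/eqP; rewrite -subr_eq0 -abs_eq0; apply/eqP.
apply/le_anti; rewrite abs_ge0 andbT; apply/ler_addgt0Pr => e He.
rewrite add0r; case: (H1 e He) => M1 HM1; case: (H2 e He) => M2 HM2.
have -> : l1 - l2 = (s (maxn M1 M2) - l2) - (s (maxn M1 M2) - l1) by ring.
apply/ltW/absB_lt; [apply: HM2|apply: HM1]; lia.
Qed.

Lemma cvg_const c : seq_cvg_to abs (fun _ => c) c.
Proof. by move=> e He; exists 0%N => m _; rewrite subrr abs0. Qed.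

Lemma cvg_add s t l l' : seq_cvg_to abs s l -> seq_cvg_to abs t l' ->
  seq_cvg_to abs (fun m => s m + t m) (l + l').
Proof.
move=> H1 H2 e He; case: (H1 e He) => M1 HM1; case: (H2 e He) => M2 HM2.
exists (maxn M1 M2) => m Hm.
have -> : s m + t m - (l + l') = (s m - l) + (t m - l') by ring.
apply: absD_lt; [apply: HM1|apply: HM2]; lia.
Qed.

Lemma cvg_opp s l : seq_cvg_to abs s l -> seq_cvg_to abs (fun m => - s m) (- l).
Proof.
move=> H e He; case: (H e He) => M HM; exists M => m Hm.
by rewrite -opprD absN; apply: HM.
Qed.

Lemma cvg_ev s t l M0 : (forall m, (M0 <= m)%N -> s m = t m) ->
  seq_cvg_to abs s l -> seq_cvg_to abs t l.
Proof.
move=> E H e He; case: (H e He) => M HM; exists (maxn M M0) => m Hm.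
rewrite -E; [apply: HM|]; lia.
Qed.

Lemma bounded_all (a : nat -> C) M B : (forall m, (M <= m)%N -> abs (a m) <= B) ->
  exists B', 0 < B' /\ forall m, abs (a m) <= B'.
Proof.
move=> H; exists (1 + `|B| + \sum_(i < M) abs (a i)); split.
  have : 0 <= \sum_(i < M) abs (a i) by apply: sumr_ge0.
  have := normr_ge0 B; lra.
move=> m; have Hs : 0 <= \sum_(i < M) abs (a i) by apply: sumr_ge0.
case: (ltnP m M) => Hm.
  have : abs (a m) <= \sum_(i < M) abs (a i).
    rewrite (bigD1 (Ordinal Hm)) //=; have : 0 <= \sum_(i < M | i != Ordinal Hm) abs (a i).
      by apply: sumr_ge0.
    lra.
  have := normr_ge0 B; lra.
have := H m Hm; have := ler_norm B; lra.
Qed.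

Lemma cvg_bounded s l : seq_cvg_to abs s l -> exists B, 0 < B /\ forall m, abs (s m) <= B.
Proof.
move=> H; case: (H 1 ltr01) => M HM; apply: (@bounded_all _ M (Num.max (abs l) 1)) => m Hm.
have -> : s m = (s m - l) + l by ring.
apply: le_trans (absD _ _) _; rewrite ge_max; apply/andP; split; rewrite le_max.
  by rewrite (ltW (HM m Hm)) orbT.
by rewrite lexx.
Qed.

Lemma cvg_mul s t l l' : seq_cvg_to abs s l -> seq_cvg_to abs t l' ->
  seq_cvg_to abs (fun m => s m * t m) (l * l').
Proof.
move=> H1 H2 e He; case: (cvg_bounded H1) => B [HB HsB].
have Hl' : 0 < abs l' + 1 by have := abs_ge0 l'; lra.
case: (H1 (e / (abs l' + 1))) => [|M1 HM1]; first by apply: divr_gt0.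
case: (H2 (e / B)) => [|M2 HM2]; first by apply: divr_gt0.
exists (maxn M1 M2) => m Hm.
have -> : s m * t m - l * l' = s m * (t m - l') + (s m - l) * l' by ring.
apply: absD_lt; rewrite absM.
  have H2m := HM2 m (leq_trans (leq_maxr _ _) Hm).
  have : abs (s m) * abs (t m - l') <= B * abs (t m - l').
    by apply: ler_wpM2r; [apply: abs_ge0|apply: HsB].
  have : B * abs (t m - l') < B * (e / B) by rewrite ltr_pM2l.
  rewrite mulrCA divff ?mulr1; [lra|by rewrite gt_eqF].
have H1m := HM1 m (leq_trans (leq_maxl _ _) Hm).
have : abs (s m - l) * abs l' <= abs (s m - l) * (abs l' + 1).
  by apply: ler_wpM2l; [apply: abs_ge0|lra].
have : abs (s m - l) * (abs l' + 1) < e / (abs l' + 1) * (abs l' + 1).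
  by rewrite ltr_pM2r.
rewrite divfK ?gt_eqF //; lra.
Qed.

Lemma cvg_sub s t l l' : seq_cvg_to abs s l -> seq_cvg_to abs t l' ->
  seq_cvg_to abs (fun m => s m - t m) (l - l').
Proof. by move=> H1 H2; apply: cvg_add => //; apply: cvg_opp. Qed.

Lemma abs_sum_nat_lt (a : nat -> C) n m e : 0 < e ->
  (forall k, (n <= k)%N -> (k < m)%N -> abs (a k) < e) -> abs (\sum_(n <= k < m) a k) < e.
Proof.
move=> He H; rewrite big_nat_cond; apply: abs_sum_lt => // k /andP[/andP[H1 H2] _].
exact: H.
Qed.

Definition psum (a : nat -> C) m := \sum_(k < m) a k.

Lemma psum_split (a : nat -> C) n m : (n <= m)%N ->
  psum a m - psum a n = \sum_(n <= k < m) a k.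
Proof.
move=> Hnm; rewrite /psum -!(big_mkord xpredT) (@big_cat_nat _ _ _ n 0 m) //=.
by rewrite addrAC subrr add0r.
Qed.

Lemma series_cvg (a : nat -> C) : seq_cvg_to abs a 0 -> exists l, series_sums abs a l.
Proof.
move=> H; apply: complete => e He; case: (H e He) => M HM; exists M => m n Hm Hn.
have Hk : forall k, (M <= k)%N -> abs (a k) < e by move=> k Hk; have := HM k Hk; rewrite subr0.
case: (leqP n m) => Hnm.
  by rewrite (psum_split a Hnm); apply: abs_sum_nat_lt => // k Hk1 _; apply: Hk; lia.
rewrite absB (psum_split a (ltnW Hnm)); apply: abs_sum_nat_lt => // k Hk1 _; apply: Hk; lia.
Qed.

Lemma series_terms (a : nat -> C) l : series_sums abs a l -> seq_cvg_to abs a 0.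
Proof.
move=> H; have H1 : seq_cvg_to abs (fun m => psum a m.+1) l.
  move=> e He; case: (H e He) => M HM; exists M => m Hm; apply: HM; lia.
have H2 := cvg_sub H1 H; rewrite subrr in H2; apply: (cvg_ev (M0:=0)) H2 => m _.
by rewrite /psum big_ord_recr /= addrAC subrr add0r.
Qed.

Lemma prod_small x y e Bx By : 0 < e -> 0 < By -> 0 < Bx -> abs x <= Bx -> abs y <= By ->
  (abs x < e / By \/ abs y < e / Bx) -> abs (x * y) < e.
Proof.
move=> He HBy HBx Hx Hy [H|H]; rewrite absM.
  apply: (@le_lt_trans _ _ (abs x * By)); first by apply: ler_wpM2l.
  by rewrite -ltr_pdivlMr.
apply: (@le_lt_trans _ _ (Bx * abs y)); first by apply: ler_wpM2r.
by rewrite mulrC -ltr_pdivlMr.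
Qed.

Lemma series_mul (a b : nat -> C) A B : series_sums abs a A -> series_sums abs b B ->
  series_sums abs (fun k => \sum_(i < k.+1) a i * b (k - i)%N) (A * B).
Proof.
move=> Ha Hb; have Ha0 := series_terms Ha; have Hb0 := series_terms Hb.
case: (cvg_bounded Ha0) => Ba [HBa Bda]; case: (cvg_bounded Hb0) => Bb [HBb Bdb].
pose P (f : nat -> C) m : {poly C} := \poly_(i < m) f i.
pose cf m k := (P a m * P b m)`_k.
pose c := fun k => \sum_(i < k.+1) a i * b (k - i)%N.
have E m : psum c m = psum a m * psum b m - \sum_(m <= k < (m + m)%N) cf m k.
  have E1 : psum c m = psum (cf m) m.
    apply: eq_bigr => k _; rewrite /cf coefM; apply: eq_bigr => i _.
    have Hk := ltn_ord k; have Hi := ltn_ord i.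
    rewrite !coef_poly ifT; last by lia.
    by rewrite ifT //; lia.
  have E2 : psum a m * psum b m = psum (cf m) (m + m)%N.
    have -> : psum a m = (P a m).[1] by rewrite horner_poly /psum; apply: eq_bigr => i _; rewrite expr1n mulr1.
    have -> : psum b m = (P b m).[1] by rewrite horner_poly /psum; apply: eq_bigr => i _; rewrite expr1n mulr1.
    rewrite -hornerM (@horner_coef_wide _ (m + m)%N); last first.
      apply: leq_trans (size_polyMleq _ _) _.
      rewrite /P; apply: leq_trans (leq_pred _) _; exact: leq_add (size_poly _ _) (size_poly _ _).
    by apply: eq_bigr => i _; rewrite expr1n mulr1.
  by rewrite E1 E2 -psum_split ?leq_addr // opprB addrC subrK.
move=> e He.
have HD : seq_cvg_to abs (fun m => \sum_(m <= k < (m + m)%N) cf m k) 0.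
  move=> e' He'.
  case: (Ha0 (e' / Bb)) => [|M1 HM1]; first by apply: divr_gt0.
  case: (Hb0 (e' / Ba)) => [|M2 HM2]; first by apply: divr_gt0.
  exists (2 * maxn M1 M2)%N => m Hm; rewrite subr0; apply: abs_sum_nat_lt => // k Hk1 Hk2.
  rewrite /cf coefM; apply: abs_sum_lt => // i _; rewrite !coef_poly.
  case: ifP => Hi; last by rewrite mul0r abs0.
  case: ifP => Hj; last by rewrite mulr0 abs0.
  apply: (prod_small He' HBb HBa) => //.
  case: (leqP M1 i) => HiM.
    by left; have := HM1 i HiM; rewrite subr0.
  by right; have := HM2 (k - i)%N ltac:(have := ltn_ord i; lia); rewrite subr0.
have H := cvg_sub (cvg_mul Ha Hb) HD; rewrite subr0 in H.
case: (H e He) => M HM; exists M => m Hm; rewrite -/(psum c m) E; exact: HM.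
Qed.

Lemma bern2 (h : R) k : 0 <= h -> 1 + k%:R * h + (k * k.-1)%N%:R / 2 * h ^+ 2 <= (1 + h) ^+ k.
Proof.
move=> Hh; elim: k => [|k IH]; first by rewrite expr0 mul0n !mul0r !addr0.
rewrite exprS /= natrM -[k.+1]addn1 natrD.
have H2 : 0 <= h ^+ 2 by rewrite exprn_ge0.
have Hk : 0 <= k%:R :> R by rewrite ler0n.
case: k IH Hk => [|k] IH Hk.
  by rewrite add0n expr1 add0r mul1r mulr0 mul0r mul0r addr0 lexx.
rewrite /= natrM in IH; rewrite -[k.+1]addn1 natrD in IH *.
set K := k%:R in IH Hk *.
have HK : 0 <= K by rewrite /K ler0n.
rewrite expr2 in IH H2 *.
have : 0 <= (1 + h) by lra.
move=> H1h; have := ler_wpM2l H1h IH => IH'.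
have -> : (1 + h) ^+ (k + 1 + 1) = (1 + h) * (1 + h) ^+ (k + 1) by rewrite addn1 exprS.
rewrite expr1; apply: le_trans IH'; rewrite -subr_ge0.
have -> : (1 + h) * (1 + (K + 1) * h + (K + 1) * K / 2 * (h * h)) -
    (1 + (K + 1 + 1%:R) * h + (K + 1 + 1%:R) * (K + 1) / 2 * (h * h)) =
    (K + 1) * K / 2 * (h * h * h) by rewrite /=; field.
apply: mulr_ge0; last by apply: mulr_ge0 => //; apply: mulr_ge0.
apply: divr_ge0 => //; apply: mulr_ge0 => //; lra.
Qed.

Lemma kr_small (r e : R) : 0 <= r -> r < 1 -> 0 < e ->
  exists K, forall k, (K <= k)%N -> k%:R * r ^+ k < e.
Proof.
move=> Hr0 Hr1 He; have [->|Hr] := eqVneq r 0.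
  by exists 1%N => -[|k] //= _; rewrite expr0n /= mulr0.
have Hrp : 0 < r by rewrite lt_neqAle eq_sym Hr.
pose h := r^-1 - 1.
have Hh : 0 < h by rewrite /h subr_gt0 invf_gt1.
pose x := 2 / (e * h ^+ 2).
have Hx : 0 <= x by rewrite /x divr_ge0 // ltW // mulr_gt0 // exprn_gt0.
exists (Num.bound x).+2 => k Hk.
have Hb := archi_boundP Hx.
have Hkx : x + 1 < k%:R.
  apply: lt_le_trans (_ : (Num.bound x).+1%:R <= _); first by rewrite -natr1 ltrD2r.
  by rewrite ler_nat; lia.
have Hb2 := bern2 k (ltW Hh).
have Hrh : r = (1 + h)^-1 by rewrite /h addrC subrK invrK.
rewrite Hrh exprVn.
have Hpos : 0 < (1 + h) ^+ k by rewrite exprn_gt0 //; lra.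
rewrite ltr_pdivrMr //.
case: k Hk Hkx Hb2 Hpos => [//|k] Hk Hkx Hb2 Hpos.
rewrite natrM /= in Hb2.
have HK : x < k%:R by rewrite -natr1 in Hkx; lra.
have Hk0 : 0 < k%:R :> R by apply: le_lt_trans HK.
have Hh2 : 0 < h ^+ 2 by rewrite exprn_gt0.
have He2 : 0 < e * h ^+ 2 / 2 by apply: divr_gt0 => //; exact: mulr_gt0.
have Hmain : k.+1%:R < e * (k.+1%:R * k%:R / 2 * h ^+ 2).
  have -> : e * (k.+1%:R * k%:R / 2 * h ^+ 2) = k.+1%:R * (k%:R * (e * h ^+ 2 / 2)) by ring.
  rewrite -[X in X < _]mulr1 ltr_pM2l ?ltr0n //.
  have Hx' : x * (e * h ^+ 2 / 2) = 1.
    by rewrite /x; field; apply/andP; split; rewrite ?gt_eqF ?mulr_gt0.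
  have : x * (e * h ^+ 2 / 2) < k%:R * (e * h ^+ 2 / 2) by rewrite ltr_pM2r.
  lra.
have Hle : e * (k.+1%:R * k%:R / 2 * h ^+ 2) <= e * (1 + h) ^+ k.+1.
  apply: ler_wpM2l; first lra.
  apply: le_trans Hb2; have : 0 <= k.+1%:R * h by apply: mulr_ge0; [apply: ler0n|lra].
  lra.
lra.
Qed.

Definition lac k : C := if k == 0%N then 0 else (-1) ^+ k.+1 / k%:R.

Lemma natC_neq0 k : (0 < k)%N -> (k%:R : C) != 0.
Proof.
move=> Hk; rewrite -abs_eq0; apply/negP => /eqP H; have := abs_nat_ge Hk.
rewrite H; apply/negP; rewrite -ltNge invr_gt0 ltr0n //.
Qed.

Lemma abs_nat_inv k : (0 < k)%N -> (abs (k%:R : C))^-1 <= k%:R.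
Proof.
move=> Hk; have H := abs_nat_ge Hk.
have Hp : 0 < abs (k%:R : C) by apply: abs_gt0; apply: natC_neq0.
rewrite -[X in _ <= X]invrK lef_pV2 ?posrE ?invr_gt0 ?ltr0n //.
Qed.

Lemma abs_lac k : abs (lac k) <= k%:R.
Proof.
rewrite /lac; case: eqP => [->|/eqP Hk]; first by rewrite abs0.
rewrite absM absX absN1 expr1n mul1r absV; apply: abs_nat_inv; lia.
Qed.

Lemma Lsum_ex x : abs x < 1 -> exists l, series_sums abs (fun k => lac k * x ^+ k) l.
Proof.
move=> Hx; apply: series_cvg => e He.
case: (kr_small (abs_ge0 x) Hx He) => K HK; exists K => k Hk.
rewrite subr0 absM absX; apply: le_lt_trans (HK k Hk).
by apply: ler_wpM2r; [apply: exprn_ge0|apply: abs_lac].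
Qed.

Lemma prod_near1 (t : nat -> C) n (d : R) : 0 <= d -> d <= 1 ->
  (forall s, (s < n)%N -> abs (t s) <= d) -> abs (\prod_(s < n) (1 + t s) - 1) <= d.
Proof.
move=> Hd0 Hd1; elim: n => [|n IH] H; first by rewrite big_ord0 subrr abs0.
rewrite big_ord_recr /=.
set P := \prod_(i < n) _.
have -> : P * (1 + t n) - 1 = (P - 1) * (1 + t n) + t n by ring.
have Htn := H n (ltnSn n).
apply: absD_le => //; rewrite absM.
have H1 : abs (1 + t n) <= 1 by apply: absD_le; rewrite ?abs1 //; lra.
have H2 : abs (P - 1) <= d by apply: IH => s Hs; apply: H; lia.
apply: le_trans (_ : d * 1 <= d); last by rewrite mulr1.
by apply: ler_pM => //; apply: abs_ge0.
Qed.

Lemma binom_prod q i : (i < q)%N ->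
  (-1) ^+ i * 'C(q.-1, i)%:R = \prod_(s < i) (1 - q%:R / (s.+1)%:R) :> C.
Proof.
elim: i => [|i IH] Hi; first by rewrite big_ord0 expr0 mul1r bin0.
rewrite big_ord_recr /= -IH; last by lia.
have Hs : (i.+1%:R : C) != 0 by apply: natC_neq0.
have E := mul_bin_left q.-1 i.
have E' : ('C(q.-1, i.+1)%:R : C) = (q.-1 - i)%N%:R * 'C(q.-1, i)%:R / i.+1%:R.
  by rewrite -natrM -E natrM mulrC mulKf.
rewrite E' natrB; last by lia.
have Hq0 : (0 < q)%N by lia.
have -> : (q.-1%:R : C) = q%:R - 1 by rewrite -{2}(prednK Hq0) -natr1 addrK.
rewrite exprS; field; by rewrite -natr1 addrC in Hs.
Qed.

Definition dq m k : C := if k == 0%N then 0 else 'C(p ^ m, k)%:R / (p ^ m)%:R.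

Lemma lac_dq m k : (0 < k)%N -> (k <= p ^ m)%N ->
  abs (lac k - dq m k) <= (k ^ 2)%N%:R / (p ^ m)%:R.
Proof.
move=> Hk Hkq; set q := (p ^ m)%N.
have Hq : (0 < q)%N by rewrite expn_gt0 prime_gt0.
have Hq0 : (q%:R : C) != 0 by apply: natC_neq0.
have Hk0 : (k%:R : C) != 0 by apply: natC_neq0.
have Ed : dq m k = 'C(q.-1, k.-1)%:R / k%:R.
  rewrite /dq; case: eqP => [E|_]; first by move: Hk; rewrite E.
  have E := mul_bin_diag q k.-1; rewrite prednK // in E.
  have E' : (q%:R * 'C(q.-1, k.-1)%:R : C) = k%:R * 'C(q, k)%:R by rewrite -!natrM E.
  by apply/eqP; rewrite eqr_div //; apply/eqP; rewrite mulrC -E' mulrC.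
rewrite /lac ifF; last by apply/eqP; lia.
rewrite Ed -mulrBl absM absV.
have E2 : (-1) ^+ k.+1 - 'C(q.-1, k.-1)%:R = (-1) ^+ k.-1 * (1 - (-1) ^+ k.-1 * 'C(q.-1, k.-1)%:R) :> C.
  have -> : (-1) ^+ k.+1 = (-1) ^+ k.-1 :> C.
    by rewrite -(prednK Hk) /= !exprS mulrA mulrNN mulr1 mul1r.
  rewrite mulrBr mulr1 mulrA -expr2 -exprM mulnC exprM sqrrN expr1n expr1n mul1r //.
rewrite E2 absM absX absN1 expr1n mul1r binom_prod; last by lia.
set d := (k.-1)%:R / q%:R : R.
have Hqr : 0 < q%:R :> R by rewrite ltr0n.
have Hd0 : 0 <= d by rewrite /d divr_ge0.
have Hd1 : d <= 1 by rewrite /d ler_pdivrMr // mul1r ler_nat; lia.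
have Hpr := prod_near1 (t := fun s => - (q%:R / s.+1%:R)) Hd0 Hd1.
have Hb : abs (1 - \prod_(s < k.-1) (1 - q%:R / s.+1%:R)) <= d.
  rewrite absB; apply: Hpr => s Hs; rewrite absN absM absV abs_pexp -/q.
  apply: le_trans (_ : q%:R^-1 * (s.+1)%:R <= d).
    by apply: ler_wpM2l; [rewrite invr_ge0 ler0n|apply: abs_nat_inv].
  by rewrite /d mulrC ler_pM2r ?invr_gt0 // ler_nat.
have Hki := abs_nat_inv Hk.
apply: le_trans (_ : d * k%:R <= _).
  by apply: ler_pM; rewrite ?invr_ge0 ?abs_ge0.
rewrite /d natrX expr2 mulrAC ler_pM2r ?invr_gt0 // ler_pM2r ?ltr0n // ler_nat; lia.
Qed.

Lemma Eq_sum m x : ((1 + x) ^+ (p ^ m) - 1) / (p ^ m)%:R =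
  \sum_(k < (p ^ m).+1) dq m k * x ^+ k.
Proof.
rewrite [1 + x]addrC exprD1n big_ord_recl /= expr0 bin0 mulr1n addrAC subrr add0r.
rewrite big_ord_recl /dq /= mul0r add0r mulr_suml; apply: eq_bigr => i _.
by rewrite -mulr_natl mulrAC.
Qed.

Lemma log_lim x l : abs x < 1 -> series_sums abs (fun k => lac k * x ^+ k) l ->
  seq_cvg_to abs (fun m => ((1 + x) ^+ (p ^ m) - 1) / (p ^ m)%:R) l.
Proof.
move=> Hx Hl e He.
case: (Hl e He) => M1 HM1.
case: (kr_small (abs_ge0 x) Hx He) => K0 HK0.
pose y := (K0 ^ 2)%N%:R / e.
have Hy : 0 <= y by rewrite /y divr_ge0 ?ler0n // ltW.
exists (maxn M1 (Num.bound y)) => m Hm.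
set q := (p ^ m)%N.
have Hmq : (m < q)%N by apply: ltn_expl; exact: p_gt1.
have Hq : 0 < q%:R :> R by rewrite ltr0n; lia.
have Hyq : (K0 ^ 2)%N%:R / q%:R < e.
  rewrite ltr_pdivrMr // mulrC -ltr_pdivrMr //.
  apply: lt_trans (archi_boundP Hy) _; rewrite ltr_nat; lia.
rewrite Eq_sum.
have -> : \sum_(k < q.+1) dq m k * x ^+ k - l =
   \sum_(k < q.+1) (dq m k - lac k) * x ^+ k + (psum (fun k => lac k * x ^+ k) q.+1 - l).
  rewrite /psum addrA -big_split /=; congr (_ - _); apply: eq_bigr => k _; ring.
apply: absD_lt; last by apply: HM1; lia.
apply: abs_sum_lt => // k _.
have Hk := ltn_ord k; rewrite absM absX absB.
case: (posnP k) => [->|Hk0]; first by rewrite /lac /dq /= subrr abs0 mul0r.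
have Hb := lac_dq Hk0 (_ : (k <= p ^ m)%N); rewrite -/q in Hb.
apply: (@le_lt_trans _ _ ((k ^ 2)%N%:R / q%:R * abs x ^+ k)).
  by apply: ler_wpM2r; [apply: exprn_ge0; apply: abs_ge0|apply: Hb; lia].
have Hr : 0 <= abs x ^+ k by apply: exprn_ge0; apply: abs_ge0.
have Hr1 : abs x ^+ k <= 1 by apply: exprn_ile1 => //; apply/ltW.
case: (leqP K0 k) => HkK.
  have := HK0 k HkK.
  have -> : (k ^ 2)%N%:R / q%:R * abs x ^+ k = (k%:R / q%:R) * (k%:R * abs x ^+ k).
    by rewrite natrX; field; rewrite gt_eqF.
  have Hkq : k%:R / q%:R <= 1 :> R by rewrite ler_pdivrMr // mul1r ler_nat; lia.
  have : 0 <= k%:R * abs x ^+ k :> R by apply: mulr_ge0 => //; apply: ler0n.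
  have : 0 <= k%:R / q%:R :> R by apply: divr_ge0; apply: ler0n.
  nra.
apply: le_lt_trans Hyq.
have H1 : (k ^ 2)%N%:R / q%:R <= (K0 ^ 2)%N%:R / q%:R :> R.
  by rewrite ler_pM2r ?invr_gt0 // ler_nat leq_exp2r //; lia.
have : 0 <= (k ^ 2)%N%:R / q%:R :> R by apply: divr_ge0; apply: ler0n.
nra.
Qed.

Definition Elog (a : C) m := (a ^+ (p ^ m) - 1) / (p ^ m)%:R.
Definition is_log a l := seq_cvg_to abs (Elog a) l.

Lemma pm_cvg0 : seq_cvg_to abs (fun m => (p ^ m)%:R : C) 0.
Proof.
move=> e He; pose y := e^-1.
have Hy : 0 <= y by rewrite /y invr_ge0 ltW.
exists (Num.bound y) => m Hm; rewrite subr0 abs_pexp.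
have Hmq : (m < p ^ m)%N by apply: ltn_expl; exact: p_gt1.
have Hq : 0 < (p ^ m)%:R :> R by rewrite ltr0n; lia.
rewrite -[e]invrK ltf_pV2 ?posrE ?invr_gt0 //.
apply: lt_trans (archi_boundP Hy) _; rewrite ltr_nat; lia.
Qed.

Lemma log1 : is_log 1 0.
Proof. apply: (cvg_ev (M0 := 0)) (cvg_const 0) => m _; by rewrite /Elog expr1n subrr mul0r. Qed.

Lemma log_mul a b l1 l2 : is_log a l1 -> is_log b l2 -> is_log (a * b) (l1 + l2).
Proof.
move=> H1 H2.
have H3 := cvg_mul (cvg_mul pm_cvg0 H1) H2; rewrite !mul0r in H3.
have H := cvg_add (cvg_add H1 H2) H3; rewrite addr0 in H.
apply: (cvg_ev (M0 := 0)) H => m _; rewrite /Elog.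
have Hq : ((p ^ m)%:R : C) != 0 by apply: natC_neq0; rewrite expn_gt0 prime_gt0.
rewrite exprMn; field => //.
Qed.

Lemma log_uniq a l1 l2 : is_log a l1 -> is_log a l2 -> l1 = l2.
Proof. exact: cvg_unique. Qed.

Lemma log_root z n : z ^+ (p ^ n) = 1 -> is_log z 0.
Proof.
move=> Hz; apply: (cvg_ev (M0 := n)) (cvg_const 0) => m Hm; rewrite /Elog.
have -> : (p ^ m)%N = (p ^ n * p ^ (m - n))%N by rewrite -expnD subnKC.
by rewrite exprM Hz expr1n subrr mul0r.
Qed.

Lemma log_pow a l n : is_log a l -> is_log (a ^+ n) (n%:R * l).
Proof.
move=> H; elim: n => [|n IH]; first by rewrite expr0 mul0r; exact: log1.
by rewrite exprS -natr1 mulrDl mul1r addrC; apply: log_mul.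
Qed.

Lemma near1_abs a : abs (a - 1) < 1 -> abs a = 1.
Proof.
move=> H; have -> : a = 1 + (a - 1) by ring.
by rewrite ultra_eq abs1.
Qed.

Lemma near1_mul a b : abs (a - 1) < 1 -> abs (b - 1) < 1 -> abs (a * b - 1) < 1.
Proof.
move=> Ha Hb; have -> : a * b - 1 = (a - 1) * (b - 1) + (a - 1) + (b - 1) by ring.
apply: absD_lt => //; apply: absD_lt => //; rewrite absM.
have := abs_ge0 (a - 1); have := abs_ge0 (b - 1); nra.
Qed.

Lemma near1_inv a : abs (a - 1) < 1 -> abs (a^-1 - 1) < 1.
Proof.
move=> Ha; have Haa := near1_abs Ha.
have Ha0 : a != 0 by rewrite -abs_eq0 Haa oner_eq0.
have -> : a^-1 - 1 = (1 - a) / a by field.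
by rewrite absM absV Haa invr1 mulr1 absB.
Qed.

Lemma near1_exp a n : abs (a - 1) < 1 -> abs (a ^+ n - 1) < 1.
Proof.
move=> Ha; elim: n => [|n IH]; first by rewrite expr0 subrr abs0.
by rewrite exprS; apply: near1_mul.
Qed.

Lemma near1_root z n : z ^+ (p ^ n) = 1 -> abs (z - 1) < 1.
Proof.
elim: n z => [|n IH] z Hz; first by rewrite expn0 expr1 in Hz; rewrite Hz subrr abs0.
have Hzp : abs (z ^+ p - 1) < 1 by apply: IH; rewrite -exprM -expnS.
rewrite ltNge; apply/negP => Hy.
set y := z - 1 in Hy.
have Hp0 : (0 < p)%N by apply: prime_gt0.
have E := exprD1n y p.
have Hmo : (ord_max : 'I_p.+1) != ord0 by rewrite -val_eqE /=; lia.
rewrite (bigD1 ord0) //= (bigD1 ord_max) //= expr0 bin0 binn !mulr1n in E.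
have Ez : z ^+ p - 1 = y ^+ p +
    \sum_(i < p.+1 | (i != ord0) && (i != ord_max)) y ^+ i *+ 'C(p, i).
  by rewrite -[z](subrK 1) -/y E; ring.
have Hyp : 1 <= abs y ^+ p by apply: exprn_ege1.
have Hrest : abs (\sum_(i < p.+1 | (i != ord0) && (i != ord_max)) y ^+ i *+ 'C(p, i))
               < abs (y ^+ p).
  rewrite absX; apply: abs_sum_lt => [|i /andP[Hi0 Him]]; first lra.
  have Hi1 : (0 < i < p)%N.
    move: Hi0 Him; rewrite -!val_eqE /= => Hi0 Him; have := ltn_ord i; lia.
  case/dvdnP: (prime_dvd_bin pprime Hi1) => c Hc.
  rewrite -mulr_natr absM Hc natrM absM absp absX.
  have H1 : abs y ^+ i <= abs y ^+ p by apply: ler_weXn2l => //; lia.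
  have H2 : abs (c%:R : C) <= 1 by apply: abs_natr_le1.
  have Hpi : 0 < (p%:R : R)^-1 by rewrite invr_gt0 ltr0n.
  have Hpi1 : (p%:R : R)^-1 < 1 by rewrite invf_lt1 ?ltr0n //; exact: pR_gt1.
  have H3 : 0 <= abs (c%:R : C) by apply: abs_ge0.
  have H4 : 0 <= abs y ^+ i by apply: exprn_ge0; apply: abs_ge0.
  apply: (@le_lt_trans _ _ (abs y ^+ p * (1 * p%:R^-1))).
    by apply: ler_pM => //; [apply: mulr_ge0 => //; apply: ltW|apply: ler_pM => //; apply: ltW].
  rewrite mul1r; nra.
move: Hzp; rewrite Ez ultra_eq // absX; lra.
Qed.

Lemma is_log_of x l : abs (x - 1) < 1 -> series_sums abs (fun k => lac k * (x - 1) ^+ k) l ->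
  is_log x l.
Proof. by move=> Hx Hl; have := log_lim Hx Hl; rewrite addrC subrK. Qed.

Lemma near1_expz u (j : int) : abs (u - 1) < 1 -> abs (u ^ j - 1) < 1.
Proof.
move=> Hu; case: j => n; first by rewrite -exprnP; apply: near1_exp.
by rewrite NegzE -exprnN; apply: near1_inv; apply: near1_exp.
Qed.

Lemma log_expz u (j : int) lu : abs (u - 1) < 1 -> is_log u lu -> is_log (u ^ j) (j%:~R * lu).
Proof.
move=> Hu Hl; case: j => n; first by rewrite -exprnP; apply: log_pow.
rewrite NegzE -exprnN.
have Ha := near1_exp n.+1 Hu.
have Hai := near1_inv Ha.
case: (Lsum_ex Hai) => l' Hl'.
have H' := is_log_of Hai Hl'.
have Hpow := log_pow n.+1 Hl.
have Hm := log_mul Hpow H'.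
have Hne : u ^+ n.+1 != 0 by rewrite -abs_eq0 (near1_abs Ha) oner_eq0.
rewrite divff // in Hm.
have E := log_uniq Hm log1.
have -> : (- n.+1%:Z)%:~R * lu = l'.
  rewrite mulrNz mulNr -pmulrn mulr_natl -mulr_natl.
  by apply/eqP; rewrite eq_sym -subr_eq0 opprK addrC E.
exact: H'.
Qed.

Lemma log_int (u z : C) n (j : int) lu lx :
  abs (u - 1) < 1 -> z ^+ (p ^ n) = 1 ->
  series_sums abs (fun k => lac k * (u - 1) ^+ k) lu ->
  series_sums abs (fun k => lac k * (u ^ j * z - 1) ^+ k) lx -> lx = j%:~R * lu.
Proof.
move=> Hu Hz Hlu Hlx.
have Hx : abs (u ^ j * z - 1) < 1.
  by apply: near1_mul; [apply: near1_expz|apply: near1_root Hz].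
have H1 := is_log_of Hx Hlx.
have H2 := log_mul (log_expz j Hu (is_log_of Hu Hlu)) (log_root Hz).
rewrite addr0 in H2; exact: log_uniq H1 H2.
Qed.

Variables (F : fieldType) (iota : {rmorphism F -> C}).
Hypothesis completeF : forall s : nat -> F, cauchy_seq (fun x => abs (iota x)) s ->
  exists l, seq_cvg_to (fun x => abs (iota x)) s l.

Definition ev (x : C) (a : nat -> F) l := series_sums abs (fun k => iota (a k) * x ^+ k) l.

Lemma ev_unique x a l1 l2 : ev x a l1 -> ev x a l2 -> l1 = l2.
Proof. exact: cvg_unique. Qed.

Lemma ev_ext x a b l : (forall k, a k = b k) -> ev x a l -> ev x b l.
Proof.
move=> E H; apply: (cvg_ev (M0 := 0)) H => m _; apply: eq_bigr => k _; by rewrite E.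
Qed.

Lemma ev_zero x : ev x (fun _ => 0) 0.
Proof.
apply: (cvg_ev (M0 := 0)) (cvg_const 0) => m _.
by rewrite big1 // => k _; rewrite rmorph0 mul0r.
Qed.

Lemma ev_add x a b A B : ev x a A -> ev x b B -> ev x (fun k => a k + b k) (A + B).
Proof.
move=> Ha Hb; apply: (cvg_ev (M0 := 0)) (cvg_add Ha Hb) => m _.
by rewrite -big_split /=; apply: eq_bigr => k _; rewrite rmorphD mulrDl.
Qed.

Lemma ev_opp x a A : ev x a A -> ev x (fun k => - a k) (- A).
Proof.
move=> Ha; apply: (cvg_ev (M0 := 0)) (cvg_opp Ha) => m _.
by rewrite -sumrN; apply: eq_bigr => k _; rewrite rmorphN mulNr.
Qed.

Lemma ev_cst x c : ev x (fun k => if k == 0%N then c else 0) (iota c).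
Proof.
apply: (cvg_ev (M0 := 1)) (cvg_const (iota c)) => -[//|m] _.
by rewrite big_ord_recl /= expr0 mulr1 big1 ?addr0 // => k _; rewrite rmorph0 mul0r.
Qed.

Lemma ev_mul x a b A B : ev x a A -> ev x b B -> ev x (hmul a b) (A * B).
Proof.
move=> Ha Hb; have H := series_mul Ha Hb.
apply: (cvg_ev (M0 := 0)) H => m _; apply: eq_bigr => k _.
rewrite /hmul rmorph_sum mulr_suml; apply: eq_bigr => i _.
rewrite rmorphM mulrACA -exprD subnKC //; by have := ltn_ord i.
Qed.

Definition laF k : F := if k == 0%N then 0 else (-1) ^+ k.+1 / k%:R.

Lemma iota_laF k : iota (laF k) = lac k.
Proof.
rewrite /laF /lac; case: eqP => _; first by rewrite rmorph0.
by rewrite rmorphM rmorphXn rmorphN1 fmorphV rmorph_nat.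
Qed.

Lemma ev_log x : abs x < 1 -> exists l, ev x laF l.
Proof.
move=> Hx; case: (Lsum_ex Hx) => l Hl; exists l.
by apply: (cvg_ev (M0 := 0)) Hl => m _; apply: eq_bigr => k _; rewrite iota_laF.
Qed.

Lemma ev_log_int (u z : C) n (j : int) lu lx :
  abs (u - 1) < 1 -> z ^+ (p ^ n) = 1 ->
  ev (u - 1) laF lu -> ev (u ^ j * z - 1) laF lx -> lx = j%:~R * lu.
Proof.
move=> Hu Hz H1 H2; apply: (log_int Hu Hz).
  by apply: (cvg_ev (M0 := 0)) H1 => m _; apply: eq_bigr => k _; rewrite iota_laF.
by apply: (cvg_ev (M0 := 0)) H2 => m _; apply: eq_bigr => k _; rewrite iota_laF.
Qed.

Lemma cvg_cauchy (T : zmodType) (ab : T -> R) (s : nat -> T) l :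
  (forall x y, ab (x + y) <= Num.max (ab x) (ab y)) -> (forall x, ab (- x) = ab x) ->
  seq_cvg_to ab s l -> cauchy_seq ab s.
Proof.
move=> HD HN H e He; case: (H e He) => M HM; exists M => m n Hm Hn.
have -> : s m - s n = (s m - l) + - (s n - l) by rewrite opprB addrA subrK.
apply: le_lt_trans (HD _ _) _; rewrite gt_max HN !HM //.
Qed.

Lemma log_in_F (x : F) : abs (iota x) < 1 -> exists l : F, ev (iota x) laF (iota l).
Proof.
move=> Hx; case: (ev_log Hx) => L HL.
pose s m := \sum_(k < m) laF k * x ^+ k.
have Hs : forall m, iota (s m) = psum (fun k => iota (laF k) * iota x ^+ k) m.
  by move=> m; rewrite rmorph_sum; apply: eq_bigr => k _; rewrite rmorphM rmorphXn.
have Hc : cauchy_seq (fun y => abs (iota y)) s.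
  have HC := cvg_cauchy absD absN HL.
  move=> e He; case: (HC e He) => M HM; exists M => m n Hm Hn.
  by rewrite rmorphB !Hs; apply: HM.
case: (completeF Hc) => l Hl; exists l => e He; case: (Hl e He) => M HM; exists M => m Hm.
by have := HM m Hm; rewrite rmorphB Hs.
Qed.

Definition SH (a : ps F) := inH abs iota (psc a).
Definition Lcst (c : F) : ps F := PS (fun k => if k == 0%N then c else 0).

Lemma hmulE (a b : nat -> F) n : hmul' a b n = hmul a b n. Proof. by []. Qed.

Lemma ev_one x : ev x (psc (1 : ps F)) 1.
Proof.
have := ev_cst x 1; rewrite rmorph1; apply: ev_ext => k /=.
by case: eqP.
Qed.

Lemma ev_psD x a b A B : ev x (psc a) A -> ev x (psc b) B -> ev x (psc (a + b)) (A + B).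
Proof. exact: ev_add. Qed.
Lemma ev_psN x a A : ev x (psc a) A -> ev x (psc (- a)) (- A).
Proof. exact: ev_opp. Qed.
Lemma ev_psM x a b A B : ev x (psc a) A -> ev x (psc b) B -> ev x (psc (a * b)) (A * B).
Proof. exact: ev_mul. Qed.

Lemma SH0 : SH 0. Proof. by move=> z _; exists 0; exact: ev_zero. Qed.
Lemma SH1 : SH 1. Proof. by move=> z _; exists 1; exact: ev_one. Qed.
Lemma SHD a b : SH a -> SH b -> SH (a + b).
Proof. move=> Ha Hb z Hz; case: (Ha z Hz) => A HA; case: (Hb z Hz) => B HB; exists (A + B); exact: ev_psD. Qed.
Lemma SHN a : SH a -> SH (- a).
Proof. move=> Ha z Hz; case: (Ha z Hz) => A HA; exists (- A); exact: ev_psN. Qed.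
Lemma SHM a b : SH a -> SH b -> SH (a * b).
Proof. move=> Ha Hb z Hz; case: (Ha z Hz) => A HA; case: (Hb z Hz) => B HB; exists (A * B); exact: ev_psM. Qed.

Lemma ev_prod x n (f : 'I_n -> ps F) (vals : 'I_n -> C) :
  (forall i, ev x (psc (f i)) (vals i)) -> ev x (psc (\prod_i f i)) (\prod_i vals i).
Proof.
elim: n f vals => [|n IH] f vals H; first by rewrite !big_ord0; exact: ev_one.
rewrite !big_ord_recr /=; apply: ev_psM => //; exact: IH.
Qed.

Lemma prod_ps_neq0 n (f : 'I_n -> ps F) : (forall i, f i != 0) -> \prod_i f i != 0.
Proof.
elim: n f => [|n IH] f H; first by rewrite big_ord0 oner_neq0.
rewrite big_ord_recr /=; apply: psmul_neq0 => //; exact: IH.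
Qed.

Lemma Lfac_neq0 c : PS laF - Lcst c != 0.
Proof.
apply/eqP => /(congr1 (fun a => psc a 1%N)) /=.
rewrite /laF /= subr0 expr2 mulrNN mulr1 divr1 => /eqP; by rewrite oner_eq0.
Qed.

Variables (u : F) (d : nat) (phi : 'M[F]_d) (Fil : int -> 'M[F]_d) (N : nat).
Hypothesis Hu : abs (iota u - 1) < 1.
Hypothesis Hfil : filtered_phi_module phi Fil.

Lemma upper_bound (fam : 'I_d.+1 -> 'I_d -> nat -> F) :
  (forall k, in_LN abs iota p phi Fil u N (fam k)) -> ~ H_independent abs iota fam.
Proof.
move=> HL Hind.
have Hin : forall k i, SH (PS (fam k i)) by move=> k i; case: (HL k) => H _; exact: H.
have [c [Sc [[k1 Hk1] Hrel]]] := dependence SH0 SH1 SHD SHN SHM (@psmul_neq0 F) Hin.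
have := Hind (fun k => psc (c k)) Sc.
have Hr : forall (i : 'I_d) (n : nat), \sum_(k < d.+1) hmul (psc (c k)) (fam k i) n = 0.
  move=> i n; rewrite -[RHS](psc0 F n) -(Hrel i) psc_sum.
  by apply: eq_bigr.
move=> /(_ Hr k1) H0; move/eqP: Hk1; apply; apply: ps_ext => n; by rewrite H0.
Qed.

Lemma lower_bound : exists fam : 'I_d -> 'I_d -> nat -> F,
  (forall k, in_LN abs iota p phi Fil u N (fam k)) /\ H_independent abs iota fam.
Proof.
case: Hfil => Hunit Fdec Fexh Fsep.
have [j0 Hj0] := fil_full Fdec Fexh.
have [T HT] := fil_top Fdec Fsep.
have HleT : forall j, le_tHT Fil j -> j <= T.
  move=> j [i [Hji Hi]]; apply: le_trans Hji _; rewrite leNgt; apply/negP => HTi.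
  by move/eqP: Hi; apply; apply: HT.
have Hu' : abs (iota (u - 1)) < 1 by rewrite rmorphB rmorph1.
have [ell Hell] := log_in_F Hu'.
rewrite rmorphB rmorph1 in Hell.
pose K := absz (T - j0).
pose cj (i : nat) : F := (j0 + 1 + i%:Z)%:~R * ell.
pose fps := \prod_(i < K) (PS laF - Lcst (cj i)).
have Hfps0 : fps != 0 by apply: prod_ps_neq0 => i; exact: Lfac_neq0.
have Hev : forall x Lx, ev x laF Lx ->
    ev x (psc fps) (\prod_(i < K) (Lx - iota (cj i))).
  move=> x Lx HLx; apply: ev_prod => i; apply: ev_psD => //; apply: ev_psN; exact: ev_cst.
have HSf : SH fps.
  move=> z Hz; case: (ev_log Hz) => Lz HLz; eexists; exact: Hev HLz.
pose fam (k i : 'I_d) : nat -> F := if i == k then psc fps else (fun _ => 0).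
exists fam; split.
- move=> k; split.
    move=> i; rewrite /fam; case: eqP => _; [exact: HSf|exact: SH0].
  move=> j n zeta Hle HnN Hprim v Hv.
  have Hz : zeta ^+ (p ^ n) = 1 by apply: prim_expr_order.
  set x := iota u ^ j * zeta - 1 in Hv.
  have Hx : abs x < 1 by apply: near1_mul; [apply: near1_expz|apply: near1_root Hz].
  have [Lx HLx] := ev_log Hx.
  have Lval : Lx = j%:~R * iota ell := ev_log_int Hu Hz Hell HLx.
  pose w := \prod_(i < K) (j%:~R * ell - cj i).
  have Hv0 : forall i, v 0 i = iota (if i == k then w else 0).
    move=> i; have := Hv i; rewrite /fam; case: eqP => _ H.
      rewrite (ev_unique H (Hev _ _ HLx)) Lval rmorph_prod; apply: eq_bigr => i' _.
      by rewrite rmorphB rmorphM rmorph_int.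
    by rewrite rmorph0; exact: ev_unique H (ev_zero x).
  pose W0 : 'rV[F]_d := \row_i (if i == k then w else 0).
  have Ev : v = map_mx iota W0.
    by apply/matrixP => a b; rewrite ord1 !mxE Hv0.
  rewrite Ev -map_mxM.
  case: (lerP j j0) => Hjj0.
    have := Hj0 j Hjj0 (W0 *m invmx phi ^+ n.+1); case/submxP => D HD.
    exists (map_mx iota D); split; last by rewrite HD map_mxM.
    move=> i; exists zeta; split => //; exists (D 0 i)%:P.
    by rewrite map_polyC hornerC mxE.
  have Hw : w = 0.
    have HjT := HleT j Hle.
    have Hi0 : (absz (j - j0 - 1)%R < K)%N by rewrite /K; lia.
    rewrite /w (bigD1 (Ordinal Hi0)) //= /cj.
    have -> : (j0 + 1 + (absz (j - j0 - 1)%R)%:Z)%R = j by lia.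
    by rewrite subrr mul0r.
  have -> : W0 = 0 by apply/matrixP => a b; rewrite !mxE Hw; case: eqP.
  exists 0; split; last by rewrite mul0mx map_mx0 mul0mx.
  move=> i; exists zeta; split => //; exists 0.
  by rewrite mxE map_poly0 horner0.
- move=> h Hh Hrel k n.
  have E : PS (h k) * fps = 0.
    apply: ps_ext => m; rewrite psc0 pscM hmulE -(Hrel k m) (bigD1 k) //= big1 ?addr0.
      by rewrite /fam eqxx.
    move=> k' Hk'; rewrite /fam eq_sym (negbTE Hk') /hmul big1 // => i _; by rewrite mulr0.
  have : PS (h k) = 0.
    apply/eqP; apply/negPn/negP => Hne; have := psmul_neq0 Hne Hfps0; by rewrite E eqxx.
  by move/(congr1 (fun a => psc a n)).
Qed.

Lemma main_sec : H_rank abs iota (in_LN abs iota p phi Fil u N) d.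
Proof. split; [exact: lower_bound|exact: upper_bound]. Qed.

End An.




Theorem mainTheorem13 (p : nat) (R : realType) (C : closedFieldType) (F : fieldType)
    (abs : C -> R) (iota : {rmorphism F -> C}) (u : F)
    (d : nat) (phi : 'M[F]_d) (Fil : int -> 'M[F]_d) (N : nat) :
  prime p -> odd p ->
  padic_setting abs iota p ->
  top_generator abs iota p u ->
  filtered_phi_module phi Fil ->
  H_rank abs iota (in_LN abs iota p phi Fil u N) d.
Proof.
move=> Hp _ [[Hge0 Heq0] HM HD Hpabs [HC HCF _]] [Hu _] Hfil.
apply: (main_sec Hge0 Heq0 HM HD Hpabs Hp HC HCF N _ Hfil).
apply: le_lt_trans Hu _.
by rewrite invf_lt1 ?ltr0n ?prime_gt0 // ltr1n prime_gt1.
Qed.
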